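(* Let $G=(V,v,E)$ be a directed graph with node set $V=\{1,\dots,n\}$, target node $v$ and edge set $E$, and let $Z$ be a set of ordered node pairs with $Z\cap E=\emptyset$. For $\mathbf{y}\in\{0,1\}^{Z}$ with support $Y$, let $\mathcal{FR}(\mathbf{y})\ge0$ be the expected first return time to $v$ of the PageRank random walk on $(V,E\cup Y)$. Let $\mathcal{Y}$ be a constraint set with $\mathcal{Y}\cap\{0,1\}^{Z}\ne\emptyset$, and for disjoint $S,N\subseteq Z$ let $\gamma(S,N)=\min\{\mathcal{FR}(\mathbf{y}): y_e=1\ \forall e\in S,\ y_e=0\ \forall e\in N,\ \mathbf{y}\in\{0,1\}^{Z}\}$. Let $\bar{\mathbf{y}}\in\mathcal{Y}\cap\{0,1\}^{Z}$ with support $\bar Y$, and let $e^1,e^2,\dots,e^{K}$ ($K=|Z\setminus\bar Y|$) be an arbitrary ordering of the edges of $Z\setminus\bar Y$. For $r=1,\dots,K$ define $$\hat\pi_{e^r}(\bar{\mathbf{y}})=\min\Big\{0,\,-\mathcal{FR}(\bar{\mathbf{y}})+\min\{\mathcal{FR}(\mathbf{y}): y_{e^r}=1,\ y_{e^k}=0\ (k=r+1,\dots,K),\ \mathbf{y}\in\{0,1\}^{Z}\}\Big\}=\min\Big\{0,\,-\mathcal{FR}(\bar{\mathbf{y}})+\gamma\big(\{e^r\},\{e^{r+1},\dots,e^{K}\}\big)\Big\}.$$ Then the inequality $$\theta\ \ge\ \mathcal{FR}(\bar{\mathbf{y}})+\sum_{e\in\bar Y}\min\{0,\gamma(\emptyset,\{e\})-\mathcal{FR}(\bar{\mathbf{y}})\}(1-y_e)+\sum_{k=1}^{K}\hat\pi_{e^k}(\bar{\mathbf{y}})\,y_{e^k}$$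 is valid, i.e. it is satisfied by every pair $(\theta,\mathbf{y})$ with $\mathbf{y}\in\mathcal{Y}\cap\{0,1\}^{Z}$, $\theta\in\mathbb{R}_+$ and $\theta\ge\mathcal{FR}(\mathbf{y})$.
   Context: The PageRank random walk is the random walk defined by the PageRank (Google) matrix with fixed damping and teleportation, as in Csáji–Jungers–Blondel; the expected first return time to $v$ is the expected number of steps for the walk started at $v$ to return to $v$ (the reciprocal of $v$'s PageRank). The underlying problem is $\min\{\mathcal{FR}(\mathbf{y}):\mathbf{y}\in\mathcal{Y}\cap\{0,1\}^{Z}\}$ in epigraph form with variable $\theta$. *)

(* Defs.v *)
From HB Require Import structures.
From mathcomp Require Import all_boot all_order all_algebra.
From mathcomp Require Import reals.
Set Implicit Arguments. Unset Strict Implicit. Unset Printing Implicit Defensive.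
Import Order.TTheory GRing.Theory Num.Theory.
Local Open Scope ring_scope.

Section PageRank.
Variables (R : realType) (n : nat).
Notation V := 'I_n.

Definition outdeg (A : {set V * V}) (i : V) : nat := #|[set j | (i, j) \in A]|.

(* random-walk transition matrix; dangling nodes jump according to the
   teleportation distribution z *)
Definition walk (z : V -> R) (A : {set V * V}) (i j : V) : R :=
  if outdeg A i == 0%N then z j
  else if (i, j) \in A then (outdeg A i)%:R^-1 else 0.

Definition google (c : R) (z : V -> R) (A : {set V * V}) (i j : V) : R :=
  (1 - c) * walk z A i j + c * z j.

(* p is the PageRank vector: a stationary probability distribution of the
   Google matrix (it is unique when 0 < c and z > 0) *)
Definition is_pagerank (c : R) (z : V -> R) (A : {set V * V}) (p : V -> R) : Prop :=
  [/\ forall i, 0 <= p i, \sum_i p i = 1 &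
      forall j, p j = \sum_i p i * google c z A i j].

(* expected first return time to v = reciprocal of v's PageRank *)
Definition first_return (p : V -> R) (v : V) : R := (p v)^-1.

(* binary vector y in {0,1}^Z, given by its support Y, as a real vector *)
Definition indic (Y : {set V * V}) (e : V * V) : R := if e \in Y then 1 else 0.

(* gamma(S,N) = min { F(y) : y in {0,1}^Z, y_e = 1 on S, y_e = 0 on N };
   the default value of the finite minimum (max of F and 0) is irrelevant
   whenever the feasible set is nonempty (e.g. S, N disjoint subsets of Z) *)
Definition gamma (F : {set V * V} -> R) (Z S N : {set V * V}) : R :=
  \big[Order.min/ \big[Order.max/0]_(Y : {set V * V}) F Y]_(Y : {set V * V} |
     [&& Y \subset Z, S \subset Y & [disjoint N & Y]]) F Y.

End PageRank.

(* Main.v *)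
Require Import Defs.
From HB Require Import structures.
From mathcomp Require Import all_boot all_order all_algebra.
From mathcomp Require Import reals.
Import Order.TTheory GRing.Theory Num.Theory.
Local Open Scope ring_scope.

Theorem theorem2 (R : realType) (n : nat) (v : 'I_n)
  (E Z : {set 'I_n * 'I_n}) (c : R) (z : 'I_n -> R)
  (pr : {set 'I_n * 'I_n} -> 'I_n -> R)
  (Ycal : ('I_n * 'I_n -> R) -> Prop)
  (Ybar : {set 'I_n * 'I_n}) (K : nat) (e : 'I_K -> 'I_n * 'I_n)
  (theta : R) (Y : {set 'I_n * 'I_n}) :
  0 < c < 1 ->
  (forall i, 0 < z i) -> \sum_i z i = 1 ->
  [disjoint Z & E] ->
  (forall Y' : {set 'I_n * 'I_n}, Y' \subset Z -> is_pagerank c z (E :|: Y') (pr Y')) ->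
  (exists Y' : {set 'I_n * 'I_n}, Y' \subset Z /\ Ycal (indic R Y')) ->
  Ybar \subset Z -> Ycal (indic R Ybar) ->
  K = #|Z :\: Ybar| -> injective e -> (forall k, e k \in Z :\: Ybar) ->
  let FR := fun Y' : {set 'I_n * 'I_n} => first_return (pr Y') v in
  let pihat := fun r : 'I_K =>
    Order.min 0 (- FR Ybar + gamma FR Z [set e r] [set e k | k : 'I_K & (r < k)%N]) in
  Y \subset Z -> Ycal (indic R Y) -> 0 <= theta -> FR Y <= theta ->
  FR Ybar
  + \sum_(f in Ybar) Order.min 0 (gamma FR Z set0 [set f] - FR Ybar) * (1 - indic R Y f)
  + \sum_(k < K) pihat k * indic R Y (e k)
  <= theta.
Proof.
move=> _ _ _ _ _ _ sYbZ _ HK einj eZ FR pihat sYZ _ _ HFR.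
have gam : forall S N Y' : {set 'I_n * 'I_n}, Y' \subset Z -> S \subset Y' -> [disjoint N & Y'] ->
    gamma FR Z S N <= FR Y'.
  move=> S N Y' h1 h2 h3; rewrite /gamma.
  by apply: bigmin_le_cond; rewrite h1 h2 h3.
have indic01 : forall f, indic R Y f = 0 \/ indic R Y f = 1.
  by move=> f; rewrite /indic; case: (f \in Y); [right|left].
have S1le : \sum_(f in Ybar) Order.min 0 (gamma FR Z set0 [set f] - FR Ybar)
     * (1 - indic R Y f) <= 0.
  rewrite big_seq_cond; apply: sumr_le0 => f _.
  have hm : Order.min 0 (gamma FR Z set0 [set f] - FR Ybar) <= 0 by rewrite ge_min lexx.
  by case: (indic01 f) => ->; rewrite ?subr0 ?subrr ?mulr1 ?mulr0.
have piLe : forall k, pihat k * indic R Y (e k) <= 0.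
  move=> k; have hm : pihat k <= 0 by rewrite /pihat ge_min lexx.
  by case: (indic01 (e k)) => ->; rewrite ?mulr1 ?mulr0.
have S2le : \sum_(k < K) pihat k * indic R Y (e k) <= 0.
  by apply: sumr_le0 => k _; apply: piLe.
case: (pickP (fun k : 'I_K => e k \in Y)) => [k0 Hk0 | Hno].
  pose r := [arg max_(k > k0 | e k \in Y) (k : nat)].
  have [rY rmax] : e r \in Y /\ forall k : 'I_K, e k \in Y -> (k <= r)%N.
    by rewrite /r; case: arg_maxnP => // i Hi Hmax; split => // k; apply: Hmax.
  rewrite (bigD1 r) //= /indic rY mulr1 -/(indic R Y).
  have hpi : pihat r <= - FR Ybar + FR Y.
    rewrite /pihat ge_min; apply/orP; right; rewrite lerD2l; apply: gam => //.
      by rewrite sub1set.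
    rewrite -setI_eq0; apply/eqP/setP => x; rewrite in_set0 in_setI.
    apply/negbTE/andP => -[/imsetP [k]]; rewrite inE => rk -> xY.
    by move: (rmax k xY); rewrite leqNgt rk.
  have hrest : \sum_(i < K | i != r) pihat i * indic R Y (e i) <= 0.
    by apply: sumr_le0 => i _; apply: piLe.
  apply: le_trans HFR.
  have -> : FR Y = FR Ybar + 0 + (- FR Ybar + FR Y + 0) by rewrite !addr0 addrA addrN add0r.
  by apply: lerD; [apply: lerD | apply: lerD].
have imE : [set e k | k : 'I_K] = Z :\: Ybar.
  apply/eqP; rewrite eqEcard; apply/andP; split.
    by apply/subsetP => x /imsetP [k _ ->]; apply: eZ.
  by rewrite card_imset // card_ord HK.
have S20 : \sum_(k < K) pihat k * indic R Y (e k) = 0.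
  by apply: big1 => k _; rewrite /indic (Hno k) mulr0.
rewrite S20 addr0.
have sYYb : Y \subset Ybar.
  apply/subsetP => x xY; apply/negPn/negP => xnb.
  have : x \in Z :\: Ybar by rewrite inE xnb (subsetP sYZ).
  by rewrite -imE => /imsetP [k _ ekx]; move: (Hno k); rewrite -ekx xY.
case: (pickP (fun f => (f \in Ybar) && (f \notin Y))) => [f /andP [fb fY] | Hall].
  rewrite (bigD1 f) //= /indic (negbTE fY) subr0 mulr1 -/(indic R Y).
  have hg : Order.min 0 (gamma FR Z set0 [set f] - FR Ybar) <= FR Y - FR Ybar.
    rewrite ge_min; apply/orP; right; rewrite lerD2r; apply: gam => //.
      by rewrite sub0set.
    by rewrite disjoints1.
  have hrest : \sum_(i in Ybar | i != f) Order.min 0 (gamma FR Z set0 [set i] - FR Ybar)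
      * (1 - indic R Y i) <= 0.
    apply: sumr_le0 => i _.
    have hm : Order.min 0 (gamma FR Z set0 [set i] - FR Ybar) <= 0 by rewrite ge_min lexx.
    by case: (indic01 i) => ->; rewrite ?subr0 ?subrr ?mulr1 ?mulr0.
  apply: le_trans HFR.
  have -> : FR Y = FR Ybar + (FR Y - FR Ybar + 0) by rewrite addr0 addrC subrK.
  by apply: lerD => //; apply: lerD.
have eqY : Y = Ybar.
  apply/eqP; rewrite eqEsubset sYYb /=; apply/subsetP => x xb.
  by move: (Hall x); rewrite xb /= => /negbFE.
apply: le_trans HFR.
have -> : FR Y = FR Ybar + 0 by rewrite addr0 eqY.
by apply: lerD.
Qed.
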